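(* Let $(X,U)$ be a measurable space, $\mu:U\to B_2$ a measure, and $U'$ the set of measurable functions $X\to B_2$. Consider the map $U'\to B_2$, $f\mapsto\int f\,d\mu=\mu(\mathrm{supp}\,f)$. Then: (a) this map is linear (over $B_2$), i.e. $\int(f\oplus g)\,d\mu=\int f\,d\mu\oplus\int g\,d\mu$ and $\int (c\cdot f)\,d\mu=c\cdot\int f\,d\mu$ for $f,g\in U'$, $c\in B_2$; (b) if $f_n,f\in U'$ ($n\in\mathbb N$) and $f_n$ converges monotonously to $f$, then the binary sequence $\int f_n\,d\mu$ converges to $\int f\,d\mu$; (c) for $f,g\in U'$: $f=g$ almost everywhere if and only if $\int f\,d\mu=\int g\,d\mu$.
   Context: $B_2=\{0,1\}$, $\oplus$ addition modulo 2; functions $X\to B_2$ are added and multiplied by scalars pointwise. A measurable space $(X,U)$: $U\subset2^X$ non-empty, closed under $\Delta$ and $\cap$. $f:X\to B_2$ is measurable if $\mathrm{supp}\,f=\{x:f(x)=1\}\in U$. $\mu:U\to B_2$ is a measure if for every sequence of pairwise disjoint sets of $U$ whose union is in $U$, only finitely many have $\mu$-value 1 and $\mu$ of the union is their number modulo 2. $f_n$ converges monotonously to $f$ if either $\mathrm{supp}\,f_0\subset\mathrm{supp}\,f_1\subset\cdots$ with $\bigcup_n\mathrm{supp}\,f_n=\mathrm{supp}\,f$, or $\mathrm{supp}\,f_0\supset\mathrm{supp}\,f_1\supset\cdots$ with $\bigcap_n\mathrm{supp}\,f_n=\mathrm{supp}\,f$. A binary sequence $(x_n)$ converges to $x_0$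 if $x_n=x_0$ for all sufficiently large $n$. $f=g$ almost everywhere means $\mu(\{x:f(x)\neq g(x)\})=0$. *)

(* Defs.v *)
From mathcomp Require Import all_boot.
From mathcomp Require Import boolp classical_sets.
Set Implicit Arguments. Unset Strict Implicit. Unset Printing Implicit Defensive.
Local Open Scope classical_set_scope.

(* B_2 = bool, addition mod 2 = addb (xor), multiplication = andb. *)

Definition symdiff {X : Type} (A B : set X) : set X := (A `\` B) `|` (B `\` A).

Definition is_measurable_space {X : Type} (U : set (set X)) : Prop :=
  (exists A, U A) /\
  (forall A B, U A -> U B -> U (symdiff A B)) /\
  (forall A B, U A -> U B -> U (A `&` B)).

(* mu : U -> B_2 is a measure (values of mu outside U are irrelevant):
   for every sequence of pairwise disjoint sets of U whose union is in U,
   only finitely many have mu-value 1 (all have value 0 from index N on),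
   and mu of the union is their number modulo 2. *)
Definition is_B2_measure {X : Type} (U : set (set X)) (mu : set X -> bool) : Prop :=
  forall A : nat -> set X,
    (forall n, U (A n)) ->
    (forall i j, i <> j -> A i `&` A j = set0) ->
    U (\bigcup_n A n) ->
    exists N : nat,
      (forall n, (N <= n)%N -> mu (A n) = false) /\
      mu (\bigcup_n A n) = \big[addb/false]_(n < N) mu (A n).

Definition supp {X : Type} (f : X -> bool) : set X := [set x | f x = true].

Definition measurable_B2 {X : Type} (U : set (set X)) (f : X -> bool) : Prop :=
  U (supp f).

Definition integral_B2 {X : Type} (mu : set X -> bool) (f : X -> bool) : bool :=
  mu (supp f).

Definition converges_monotonously {X : Type} (fn : nat -> X -> bool) (f : X -> bool) : Prop :=
  ((forall n, supp (fn n) `<=` supp (fn n.+1)) /\ \bigcup_n supp (fn n) = supp f) \/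
  ((forall n, supp (fn n.+1) `<=` supp (fn n)) /\ \bigcap_n supp (fn n) = supp f).

Definition binary_converges (x : nat -> bool) (x0 : bool) : Prop :=
  exists N, forall n, (N <= n)%N -> x n = x0.

Definition ae_eq_B2 {X : Type} (mu : set X -> bool) (f g : X -> bool) : Prop :=
  mu [set x | f x <> g x] = false.

(* Main.v *)
Require Import Defs.
From mathcomp Require Import all_boot.
From mathcomp Require Import boolp classical_sets.
Set Implicit Arguments. Unset Strict Implicit. Unset Printing Implicit Defensive.
Local Open Scope classical_set_scope.

Lemma sum_tail (F : nat -> bool) K M : (K <= M)%N -> (forall n, (K <= n)%N -> F n = false) ->
  \big[addb/false]_(n < M) F n = \big[addb/false]_(n < K) F n.
Proof.
move=> hKM hF.
rewrite -!(big_mkord xpredT) (@big_cat_nat _ _ _ K 0 M _ _ (leq0n K) hKM) /=.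
rewrite [X in _ (+) X]big1_seq ?addbF // => i /andP[_]; rewrite mem_index_iota => /andP[h _].
exact: hF.
Qed.

Section S.
Variables (X : Type) (U : set (set X)) (mu : set X -> bool).
Hypothesis hU : is_measurable_space U.
Hypothesis hmu : is_B2_measure U mu.

Lemma UD A B : U A -> U B -> U (symdiff A B).
Proof. by case: hU => _ [h _]; apply: h. Qed.
Lemma UI A B : U A -> U B -> U (A `&` B).
Proof. by case: hU => _ [_ h]; apply: h. Qed.
Lemma U0 : U set0.
Proof.
case: hU => [[A hA] _]; have -> : set0 = symdiff A A.
  by apply/seteqP; split => x //=; rewrite /symdiff /= => -[] [].
exact: UD.
Qed.
Lemma Udiff A B : U A -> U B -> U (A `\` B).
Proof.
move=> hA hB; have -> : A `\` B = symdiff A (A `&` B).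
  apply/seteqP; split => x /=; rewrite /symdiff /=.
    by move=> [h1 h2]; left; split => // -[].
  by case=> [[h1 h2]|[[h1 h2] h3]]; [split => // h3; apply: h2|].
by apply: UD => //; apply: UI.
Qed.
Lemma UU A B : U A -> U B -> U (A `|` B).
Proof.
move=> hA hB; have -> : A `|` B = symdiff (symdiff A B) (A `&` B).
  apply/seteqP; split => x /=; rewrite /symdiff /=;
  have := pselect (A x); have := pselect (B x); tauto.
by apply: UD; [apply: UD|apply: UI].
Qed.

Ltac side := solve [done | apply: Udiff => // | apply: UI => // | apply: UU => //].

Lemma mu0 : mu set0 = false.
Proof.
have hu : U (\bigcup_(n : nat) (fun _ : nat => @set0 X) n).
  by rewrite bigcup_const; [exact: U0|exists 0%N].
have [N [h1 h2]] := hmu (fun=> U0) (fun _ _ _ => setI0 _) hu.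
exact: h1 (leqnn N).
Qed.

Lemma mu_add A B : U A -> U B -> A `&` B = set0 -> mu (A `|` B) = mu A (+) mu B.
Proof.
move=> hA hB hAB.
pose S n := if n is 0 then A else if n is 1 then B else set0.
have hS n : U (S n) by case: n => [|[|n]] //; exact: U0.
have hd i j : i <> j -> S i `&` S j = set0.
  case: i => [|[|i]]; case: j => [|[|j]] //= _; rewrite ?setI0 ?set0I ?hAB ?[B `&` _]setIC ?hAB //.
have hun : \bigcup_n S n = A `|` B.
  apply/seteqP; split => x /=.
    by case=> -[|[|n]] _ //= h; [left|right].
  by case=> h; [exists 0%N|exists 1%N].
have hu : U (\bigcup_n S n) by rewrite hun; exact: UU.
have [N [h1 h2]] := hmu hS hd hu.
have e1 := @sum_tail (fun n => mu (S n)) N (maxn N 2) (leq_maxl _ _) h1.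
have h1' : forall n, (2 <= n)%N -> mu (S n) = false.
  by case=> [|[|n]] //= _; exact: mu0.
have e2 := @sum_tail (fun n => mu (S n)) 2 (maxn N 2) (leq_maxr _ _) h1'.
rewrite -hun h2 -e1 e2.
by rewrite !big_ord_recl big_ord0 /= addbF.
Qed.

Lemma mu_symdiff A B : U A -> U B -> mu (symdiff A B) = mu A (+) mu B.
Proof.
move=> hA hB.
have e1 : A = (A `\` B) `|` (A `&` B).
  apply/seteqP; split => x /=.
    by move=> h; have [hb|hb] := pselect (B x); [right|left].
  by case=> -[].
have e2 : B = (B `\` A) `|` (A `&` B).
  apply/seteqP; split => x /=.
    by move=> h; have [hb|hb] := pselect (A x); [right|left].
  by case=> -[].
have d1 : (A `\` B) `&` (A `&` B) = set0.
  by apply/seteqP; split => x //= [[_ h] [_ h']].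
have d2 : (B `\` A) `&` (A `&` B) = set0.
  by apply/seteqP; split => x //= [[_ h] [h' _]].
have d3 : (A `\` B) `&` (B `\` A) = set0.
  by apply/seteqP; split => x //= [[h _] [_ h']].
have m1 : mu A = mu (A `\` B) (+) mu (A `&` B).
  by rewrite {1}e1 mu_add; try side.
have m2 : mu B = mu (B `\` A) (+) mu (A `&` B).
  by rewrite {1}e2 mu_add; try side.
rewrite m1 m2 /symdiff mu_add; try side.
by case: (mu (A `&` B)); case: (mu (A `\` B)); case: (mu (B `\` A)).
Qed.

Lemma mu_incr (A : nat -> set X) : (forall n, U (A n)) -> (forall n, A n `<=` A n.+1) ->
  U (\bigcup_n A n) -> exists N, forall n, (N <= n)%N -> mu (A n) = mu (\bigcup_n A n).
Proof.
move=> hA hinc hun.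
have mono i k : (i <= k)%N -> A i `<=` A k.
  move=> /subnK <-; elim: (k - i)%N => [|m IH] //=.
  exact: subset_trans IH (hinc _).
pose D n := if n is k.+1 then A n `\` A k else A 0%N.
have hD n : U (D n) by case: n => [|n] //=; apply: Udiff.
have hdisj i j : (i < j)%N -> D i `&` D j = set0.
  move=> hij; apply/seteqP; split => x //= [h1 h2].
  case: j hij h2 => [|j] // hij [_ h2]; apply: h2.
  apply: (mono i); first by [].
  by case: i {hij} h1 => [|i] //= [].
have hd i j : i <> j -> D i `&` D j = set0.
  move=> /eqP; rewrite neq_ltn => /orP[h|h]; first exact: hdisj.
  by rewrite setIC; apply: hdisj.
have cover n : A n = \bigcup_(k in [set k | (k <= n)%N]) D k.
  apply/seteqP; split => x /=.
    elim: n => [|n IH] h; first by exists 0%N.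
    have [h'|h'] := pselect (A n x).
      by case: (IH h') => k /= hk hD'; exists k => //=; apply: leqW.
    by exists n.+1; [rewrite /= leqnn|split].
  case=> k /= hk hDk; apply: (mono k n hk); move: hDk.
  by case: k hk => [|k] //= _ [].
have hunD : \bigcup_n D n = \bigcup_n A n.
  apply/seteqP; split => x /= [k _ h].
    by exists k => //; rewrite (cover k); exists k => /=.
  by rewrite (cover k) in h; case: h => j _ hj; exists j.
have sumA n : mu (A n) = \big[addb/false]_(k < n.+1) mu (D k).
  elim: n => [|n IH]; first by rewrite big_ord_recl big_ord0 addbF.
  have -> : A n.+1 = A n `|` D n.+1.
    apply/seteqP; split => x /=.
      by move=> h; have [h'|h'] := pselect (A n x); [left|right].
    by case=> [h|[]] //; apply: hinc.
  rewrite mu_add //; last by apply/seteqP; split => x //= [h [_ h']].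
  by rewrite big_ord_recr /= IH.
have hu : U (\bigcup_n D n) by rewrite hunD.
have [N [h1 h2]] := hmu hD hd hu.
exists N => n hn; rewrite sumA -hunD h2 (sum_tail _ h1) //; exact: leqW.
Qed.

Lemma mu_decr (A : nat -> set X) : (forall n, U (A n)) -> (forall n, A n.+1 `<=` A n) ->
  U (\bigcap_n A n) -> exists N, forall n, (N <= n)%N -> mu (A n) = mu (\bigcap_n A n).
Proof.
move=> hA hdec hI.
have mono i k : (i <= k)%N -> A k `<=` A i.
  move=> /subnK <-; elim: (k - i)%N => [|m IH] //=.
  exact: subset_trans (hdec _) IH.
pose B n := A 0%N `\` A n.
have hB n : U (B n) by apply: Udiff.
have hBinc n : B n `<=` B n.+1.
  by move=> x [h1 h2]; split => // h; apply: h2; apply: hdec.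
have hBun : \bigcup_n B n = A 0%N `\` \bigcap_n A n.
  apply/seteqP; split => x /=.
    by case=> n _ [h1 h2]; split => // h; apply: h2; apply: h.
  case=> h1 h2; apply: contra_notP h2 => h n _.
  by apply: contra_notP h => h; exists n.
have hu : U (\bigcup_n B n) by rewrite hBun; apply: Udiff.
have [N hN] := mu_incr hB hBinc hu.
have split0 (C : set X) : U C -> C `<=` A 0%N -> mu (A 0%N) = mu (A 0%N `\` C) (+) mu C.
  move=> hC hC0; rewrite -mu_add; try side; last first.
    by apply/seteqP; split => x //= [[_ h] h'].
  congr mu; apply/seteqP; split => x /=.
    by move=> h; have [h'|h'] := pselect (C x); [right|left].
  by case=> [[]|/hC0].
exists N => n hn.
have e1 := split0 _ (hA n) (mono _ _ (leq0n n)).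
have e2 := split0 _ hI (fun x h => h 0%N I).
move: (hN n hn); rewrite hBun /B => e3.
move: e1 e2; rewrite e3 => ->.
by case: (mu (A 0%N `\` _)); case: (mu (A n)); case: (mu (\bigcap_n A n)).
Qed.

End S.

Theorem proposition7p9 (X : Type) (U : set (set X)) (mu : set X -> bool)
  (hU : is_measurable_space U) (hmu : is_B2_measure U mu) :
  (* (a) linearity on U' *)
  (forall f g : X -> bool, measurable_B2 U f -> measurable_B2 U g ->
     measurable_B2 U (fun x => addb (f x) (g x)) /\
     integral_B2 mu (fun x => addb (f x) (g x)) =
       addb (integral_B2 mu f) (integral_B2 mu g)) /\
  (forall (c : bool) (f : X -> bool), measurable_B2 U f ->
     measurable_B2 U (fun x => c && f x) /\
     integral_B2 mu (fun x => c && f x) = c && integral_B2 mu f) /\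
  (* (b) monotone convergence *)
  (forall (fn : nat -> X -> bool) (f : X -> bool),
     (forall n, measurable_B2 U (fn n)) -> measurable_B2 U f ->
     converges_monotonously fn f ->
     binary_converges (fun n => integral_B2 mu (fn n)) (integral_B2 mu f)) /\
  (* (c) a.e. equality *)
  (forall f g : X -> bool, measurable_B2 U f -> measurable_B2 U g ->
     (ae_eq_B2 mu f g <-> integral_B2 mu f = integral_B2 mu g)).
Proof.
have suppx (f g : X -> bool) : supp (fun x => addb (f x) (g x)) = symdiff (supp f) (supp g).
  apply/seteqP; split => x; rewrite /supp /symdiff /=;
    by case: (f x); case: (g x); intuition.
have ae (f g : X -> bool) : [set x | f x <> g x] = symdiff (supp f) (supp g).
  apply/seteqP; split => x; rewrite /supp /symdiff /=;
    by case: (f x); case: (g x); intuition.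
split.
  move=> f g hf hg; rewrite /measurable_B2 /integral_B2 suppx.
  by split; [apply: (UD hU)|apply: (mu_symdiff hU hmu)].
split.
  case=> f hf; first by split.
  change (U (supp (fun _ : X => false)) /\ mu (supp (fun _ : X => false)) = false).
  have -> : supp (fun _ : X => false) = set0.
    by apply/seteqP; split => x.
  by split; [apply: (U0 hU)|apply: (mu0 hU hmu)].
split.
  move=> fn f hfn hf [[hi hu]|[hd hi]].
    have hu' : U (\bigcup_n supp (fn n)) by rewrite hu.
    have [N hN] := mu_incr hU hmu hfn hi hu'.
    by exists N => n hn; rewrite /integral_B2 hN // hu.
  have hi' : U (\bigcap_n supp (fn n)) by rewrite hi.
  have [N hN] := mu_decr hU hmu hfn hd hi'.
  by exists N => n hn; rewrite /integral_B2 hN // hi.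
move=> f g hf hg; rewrite /ae_eq_B2 /integral_B2 ae (mu_symdiff hU hmu) //.
by case: (mu (supp f)); case: (mu (supp g)).
Qed.
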